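(* Let $n\ge 3$, $m\ge 1$, and let $f=x_0^{a_0}x_1^{a_1}\cdots x_n^{a_n}x_{n+1}^{a_{n+1}}$ be a monomial. If $f\in I_{B_n}^{(m)}$, then $g=x_0^{t}x_1^{a_1}\cdots x_n^{a_n}x_{n+1}^{t}\in I_{B_n}^{(m)}$, where $t=\min\{a_0,a_{n+1}\}$.
   Context: Let $k$ be a field. $Q_n$ is the cycle graph on vertices $1,\dots,n$ (edges $\{i,i+1\}$ for $1\le i\le n-1$ and $\{n,1\}$). $B_n$ is the simplicial complex on $\{0,\dots,n+1\}$ with facets $\{0,i,j\}$ and $\{n+1,i,j\}$ for each edge $\{i,j\}$ of $Q_n$ (boundary of the bipyramid over $Q_n$), and $I_{B_n}\subset k[x_0,\dots,x_{n+1}]$ is its Stanley-Reisner ideal, generated by $\prod_{i\in\tau}x_i$ over non-faces $\tau$ of $B_n$. For a homogeneous ideal $I$ of $R$, $I^{(m)}=R\cap\bigcap_{P\in\mathrm{Ass}(I)}I^mR_P$. *)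

(* Defs.v *)
From mathcomp Require Import all_boot all_algebra.
From mathcomp Require Import mpoly.

Set Implicit Arguments. Unset Strict Implicit. Unset Printing Implicit Defensive.
Import GRing.Theory.
Local Open Scope ring_scope.

Section Defs.
Variable k : fieldType.
Variable N : nat.
Local Notation R := {mpoly k[N]}.

Definition ideal_gen (S : R -> Prop) (f : R) : Prop :=
  exists s : seq (R * R), (forall p, p \in s -> S p.2) /\
                          f = \sum_(p <- s) p.1 * p.2.

Definition ideal_pow (I : R -> Prop) (m : nat) : R -> Prop :=
  ideal_gen (fun f => exists s : seq R,
     size s = m /\ (forall g, g \in s -> I g) /\ f = \prod_(g <- s) g).

Definition is_ideal (P : R -> Prop) : Prop :=
  P 0 /\ (forall a b, P a -> P b -> P (a + b)) /\ (forall r a, P a -> P (r * a)).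

Definition is_prime_ideal (P : R -> Prop) : Prop :=
  is_ideal P /\ ~ P 1 /\ (forall a b, P (a * b) -> P a \/ P b).

Definition associated_prime (I P : R -> Prop) : Prop :=
  is_prime_ideal P /\ exists h : R, forall f, P f <-> I (f * h).

(* Symbolic power I^(m) = R ∩ ⋂_{P ∈ Ass(I)} I^m R_P.
   For f ∈ R, f/1 ∈ I^m R_P iff s f ∈ I^m for some s ∉ P (R is a domain). *)
Definition symbolic_power (I : R -> Prop) (m : nat) (f : R) : Prop :=
  forall P, associated_prime I P -> exists s : R, ~ P s /\ ideal_pow I m (s * f).

End Defs.

Definition cycle_edge (n i j : nat) : bool :=
  [&& (1 <= i <= n)%N, (1 <= j <= n)%N &
      [|| j == i.+1, i == j.+1, (i == 1%N) && (j == n) | (i == n) && (j == 1%N)]].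

Definition Bn_facet (n : nat) (F : {set 'I_(n.+2)}) : bool :=
  [exists i : 'I_(n.+2), exists j : 'I_(n.+2),
     cycle_edge n i j &&
     ((F == [set ord0; i; j]) || (F == [set ord_max; i; j]))].

Definition Bn_face (n : nat) (s : {set 'I_(n.+2)}) : bool :=
  [exists F : {set 'I_(n.+2)}, Bn_facet F && (s \subset F)].

Definition SR_Bn (k : fieldType) (n : nat) : {mpoly k[n.+2]} -> Prop :=
  ideal_gen (fun f => exists t : {set 'I_(n.+2)},
                ~~ Bn_face t /\ f = \prod_(i in t) 'X_i).

Definition monom (k : fieldType) (N : nat) (a : 'I_N -> nat) : {mpoly k[N]} :=
  \prod_(i < N) 'X_i ^+ a i.

Arguments SR_Bn k n : clear implicits.
Arguments monom k {N} a.

(* Main.v *)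
Require Import Defs.
From mathcomp Require Import all_boot all_algebra.
From mathcomp Require Import mpoly.
From mathcomp Require Import fingroup perm zify.
From Stdlib Require Import Classical.
Set Implicit Arguments. Unset Strict Implicit. Unset Printing Implicit Defensive.
Import GRing.Theory.
Local Open Scope ring_scope.

Section S.
Variable k : fieldType.
Variable n : nat.
Local Notation R := {mpoly k[n.+2]}.
Local Notation I := (SR_Bn k n).

Definition sw : 'S_(n.+2) := tperm (ord0 : 'I_(n.+2)) ord_max.
Definition sig (p : R) : R := msym sw p.

Lemma swK : involutive sw.
Proof. exact: tpermK. Qed.

Lemma cyc_sw (i j : 'I_(n.+2)) : cycle_edge n i j -> sw i = i.
Proof.
case/and3P=> /andP[i1 iN] _ _; rewrite /sw tpermD //.
  by rewrite -val_eqE /= eq_sym -lt0n.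
by rewrite -val_eqE /= neq_ltn ltnS iN orbT.
Qed.

Lemma facet_sw F : Bn_facet F -> Bn_facet (sw @: F).
Proof.
case/existsP=> i /existsP [j /andP[e hF]].
apply/existsP; exists i; apply/existsP; exists j; rewrite e /=.
have ei := cyc_sw e.
have ej : sw j = j.
  apply: (@cyc_sw j i); move: e; rewrite /cycle_edge.
  case/and3P=> -> -> /=.
  by case: ((j:nat) == (i:nat).+1) ((i:nat) == (j:nat).+1) ((i:nat) == 1%N) ((j:nat) == n) ((i:nat) == n) ((j:nat) == 1%N) => [] [] [] [] [] [].
case/orP: hF => /eqP ->; rewrite ?imsetU1 ?imsetU !imset_set1 ei ej /sw ?tpermL ?tpermR eqxx ?orbT //.
Qed.

Lemma face_sw (t : {set 'I_(n.+2)}) : Bn_face t -> Bn_face (sw @: t).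
Proof.
case/existsP=> F /andP[hF sub]; apply/existsP; exists (sw @: F).
by rewrite facet_sw //= imsetS.
Qed.

Lemma face_swE (t : {set 'I_(n.+2)}) : Bn_face (sw @: t) = Bn_face t.
Proof.
apply/idP/idP; last exact: face_sw.
move/face_sw; rewrite -imset_comp.
suff -> : [set (sw \o sw) x | x in t] = t by [].
by apply/setP=> x; rewrite (eq_imset _ (fun y => swK y)) imset_id.
Qed.


Lemma sigX (i : 'I_(n.+2)) : sig ('X_i : R) = 'X_(sw i).
Proof.
rewrite /sig msymX; congr 'X_[_]; apply/mnmP=> j; rewrite !mnmE /sw tpermV.
case: eqP => [->|ne]; first by rewrite tpermK eqxx.
by case: eqP => // h; exfalso; apply: ne; rewrite -h tpermK.
Qed.

Lemma sig_prod (t : {set 'I_(n.+2)}) :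
  sig (\prod_(i in t) ('X_i : R)) = \prod_(i in sw @: t) 'X_i.
Proof.
rewrite /sig rmorph_prod big_imset /=; last by move=> x y _ _; apply: perm_inj.
by apply: eq_bigr => i _; rewrite -/(sig _) sigX.
Qed.

Lemma sigK (p : R) : sig (sig p) = p.
Proof.
apply/mpolyP=> m; rewrite /sig !mcoeff_sym; congr (_@__).
by apply/mnmP=> j; rewrite !mnmE swK.
Qed.

Lemma sigM (p q : R) : sig (p * q) = sig p * sig q.
Proof. exact: rmorphM. Qed.

Lemma ideal_gen_map (S S' : R -> Prop) p :
  (forall q, S q -> S' (sig q)) -> ideal_gen S p -> ideal_gen S' (sig p).
Proof.
move=> hS [s [hs ->]]; exists [seq (sig q.1, sig q.2) | q <- s]; split.
  by move=> q /mapP [q' q'in ->] /=; apply: hS; apply: hs.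
rewrite big_map /sig rmorph_sum; apply: eq_bigr => q _; exact: rmorphM.
Qed.

Lemma sigI p : I p -> I (sig p).
Proof.
apply: ideal_gen_map => q [t [nf ->]]; exists (sw @: t); split.
  by rewrite face_swE.
exact: sig_prod.
Qed.

Lemma sigIE p : I (sig p) <-> I p.
Proof. by split=> [/sigI|/sigI //]; rewrite sigK. Qed.

Lemma sigpow m p : ideal_pow I m p -> ideal_pow I m (sig p).
Proof.
apply: ideal_gen_map => q [s [sz [hs ->]]]; exists (map sig s); split.
  by rewrite size_map.
split; first by move=> g /mapP [g' g'in ->]; apply: sigI; apply: hs.
by rewrite big_map /sig rmorph_prod.
Qed.

Lemma assoc_sig P : associated_prime I P -> associated_prime I (fun f => P (sig f)).
Proof.
move=> [[[P0 [PD PM]] [P1 Pp]] [h hh]]; split; [split; [split|split] |].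
- by rewrite /sig raddf0.
- split=> [a b ha hb|r a ha]; first by rewrite /sig raddfD; apply: PD.
  by rewrite sigM; apply: PM.
- by rewrite /sig rmorph1.
- by move=> a b; rewrite sigM; apply: Pp.
exists (sig h) => f; rewrite hh -sigIE sigM sigK; split=> //.
Qed.


Definition supp (v : 'X_{1..n.+2}) : {set 'I_(n.+2)} := [set i | (0 < v i)%N].
Definition mset (t : {set 'I_(n.+2)}) : 'X_{1..n.+2} := (\sum_(i in t) U_(i))%MM.

Lemma prodX (t : {set 'I_(n.+2)}) : \prod_(i in t) ('X_i : R) = 'X_[mset t].
Proof. by rewrite /mset (big_morph _ (@mpolyXD _ _) (@mpolyX0 _ _)). Qed.

Lemma msetE t j : mset t j = (j \in t).
Proof.
rewrite /mset mnm_sumE; case: (boolP (j \in t)) => jt.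
  rewrite (bigD1 j) //= mnm1E eqxx big1 // => i /andP[_ ij].
  by rewrite mnm1E (negbTE ij).
by rewrite big1 // => i it; rewrite mnm1E; case: eqP it jt => // ->->.
Qed.

Lemma mulX_coef (p : R) m v : (p * 'X_[m])@_v != 0 -> (m <= v)%MM.
Proof.
rewrite -mcoeff_msupp (perm_mem (msuppMX p m)) => /mapP [m' _ ->].
exact: lem_addr.
Qed.

Lemma face_sub (A B : {set 'I_(n.+2)}) : B \subset A -> Bn_face A -> Bn_face B.
Proof.
move=> sBA /existsP[F /andP[hF sAF]]; apply/existsP; exists F.
by rewrite hF (subset_trans sBA).
Qed.

Lemma I_coef p : I p -> forall v, p@_v != 0 -> ~~ Bn_face (supp v).
Proof.
case=> s [hs ->] v; rewrite raddf_sum => nz.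
have /hasP [q qin qnz] : has (fun q : R * R => (q.1 * q.2)@_v != 0) s.
  apply/negPn/negP => /hasPn hn; move: nz; rewrite big1_seq ?eqxx // => q /andP[_ qin].
  by move: (hn q qin); rewrite negbK => /eqP.
case: (hs q qin) => t [nf qe]; rewrite qe prodX in qnz.
move/mnm_lepP: (mulX_coef qnz) => le.
apply: contra nf; apply: face_sub; apply/subsetP => i it.
by rewrite inE; move: (le i); rewrite msetE it.
Qed.

Lemma coef_I p : (forall v, p@_v != 0 -> ~~ Bn_face (supp v)) -> I p.
Proof.
move=> h; rewrite (mpolyE p).
exists [seq (p@_v *: 'X_[v - mset (supp v)], \prod_(i in supp v) ('X_i : R)) | v <- msupp p].
split.
  move=> q /mapP[v vin ->] /=; exists (supp v); split => //.
  by apply: h; rewrite -mcoeff_msupp.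
rewrite [X in _ = X]big_map; apply: eq_bigr => v _ /=.
rewrite prodX -scalerAl -mpolyXD submK //.
by apply/mnm_lepP => i; rewrite msetE inE; case: ltnP.
Qed.

Lemma face_ext (S : {set 'I_(n.+2)}) :
  Bn_face S -> Bn_face (ord0 |: S) || Bn_face (ord_max |: S).
Proof.
case/existsP => F /andP[hF sSF].
case/existsP: (hF) => i /existsP[j /andP[_ /orP[]/eqP eF]].
  by apply/orP; left; apply/existsP; exists F; rewrite hF subUset sub1set sSF eF !inE eqxx.
by apply/orP; right; apply/existsP; exists F; rewrite hF subUset sub1set sSF eF !inE eqxx.
Qed.

Lemma suppU1 i v : supp (U_(i) + v)%MM = i |: supp v.
Proof.
by apply/setP => j; rewrite !inE mnmDE mnm1E eq_sym; case: (j == i).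
Qed.

Lemma notboth P : associated_prime I P -> P 'X_ord0 -> P 'X_ord_max -> False.
Proof.
move=> [[_ [P1 _]] [h hh]] /hh h0 /hh hN; apply: P1; apply/hh; rewrite mul1r.
apply: coef_I => v nz.
rewrite mulrC in h0; rewrite mulrC in hN.
have c0 : (h * 'X_[U_(ord0)])@_(U_(ord0) + v) != 0 by rewrite mcoeffMX.
have cN : (h * 'X_[U_(ord_max)])@_(U_(ord_max) + v) != 0 by rewrite mcoeffMX.
move: (I_coef h0 c0) (I_coef hN cN); rewrite !suppU1 => f0 fN.
by apply/negP => /face_ext; rewrite (negbTE f0) (negbTE fN).
Qed.

End S.

Lemma notP_mul (k : fieldType) N (P : {mpoly k[N]} -> Prop) a b :
  is_prime_ideal P -> ~ P a -> ~ P b -> ~ P (a * b).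
Proof. by move=> [_ [_ hp]] na nb /hp []. Qed.

Lemma notP_exp (k : fieldType) N (P : {mpoly k[N]} -> Prop) x d :
  is_prime_ideal P -> (d = 0%N \/ ~ P x) -> ~ P (x ^+ d).
Proof.
move=> hP [->|nx]; first by rewrite expr0; case: hP => _ [].
elim: d => [|d ih]; first by rewrite expr0; case: hP => _ [].
by rewrite exprS; apply: notP_mul.
Qed.

Lemma monomE (k : fieldType) N (b : 'I_N -> nat) :
  monom k b = 'X_[[multinom b i | i < N]].
Proof. by rewrite /monom mpolyXE_id; apply: eq_bigr => i _; rewrite mnmE. Qed.

Lemma lemma3p8_aux (k : fieldType) (n m : nat) (a : 'I_(n.+2) -> nat) :
  (3 <= n)%N -> (1 <= m)%N ->
  symbolic_power (SR_Bn k n) m (monom k a) ->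
  symbolic_power (SR_Bn k n) m
    (monom k (fun i : 'I_(n.+2) =>
       if (i == ord0) || (i == ord_max) then minn (a ord0) (a ord_max) else a i)).
Proof.
move=> n3 m1 hf P hP.
set g := monom k _.
set t := minn (a ord0) (a ord_max).
set d0 := (a ord0 - t)%N; set dN := (a ord_max - t)%N.
have n0 : (ord_max : 'I_(n.+2)) != ord0 by rewrite -val_eqE.
have E1 : monom k a = g * ('X_ord0 ^+ d0 * 'X_ord_max ^+ dN).
  rewrite /g !monomE !mpolyXn -!mpolyXD; congr 'X_[_]; apply/mnmP => i.
  rewrite !(mnmDE, mulmnE, mnm1E, mnmE).
  case: (eqVneq i ord0) => [->|ne0]; first by rewrite (negbTE n0) /= /d0 /t; lia.
  case: (eqVneq i ord_max) => [->|neN]; first by rewrite /= /dN /t; lia.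
  by rewrite /=; lia.
have E2 : sig (monom k a) = g * ('X_ord0 ^+ dN * 'X_ord_max ^+ d0).
  rewrite /g /sig !monomE msymX !mpolyXn -!mpolyXD; congr 'X_[_]; apply/mnmP => i.
  rewrite !(mnmDE, mulmnE, mnm1E, mnmE) /sw tpermV.
  case: (eqVneq i ord0) => [->|ne0].
    by rewrite tpermL (negbTE n0) /= /dN /t; lia.
  case: (eqVneq i ord_max) => [->|neN].
    by rewrite tpermR /= /d0 /t; lia.
  rewrite tpermD; first by rewrite /=; lia.
    by rewrite eq_sym.
  by rewrite eq_sym.
have hmin : d0 = 0%N \/ dN = 0%N by rewrite /d0 /dN /t; lia.
have nb := notboth hP.
have pr : is_prime_ideal P by case: hP.
have key : ((d0 = 0%N \/ ~ P 'X_ord0) /\ (dN = 0%N \/ ~ P 'X_ord_max)) \/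
           ((dN = 0%N \/ ~ P 'X_ord0) /\ (d0 = 0%N \/ ~ P 'X_ord_max)).
  by case: (classic (P 'X_ord0)) => p0; case: (classic (P 'X_ord_max)) => pN; tauto.
case: key => [[c0 cN]|[c0 cN]].
  case: (hf P hP) => s [ns pw].
  exists (s * ('X_ord0 ^+ d0 * 'X_ord_max ^+ dN)); split.
    by apply: notP_mul => //; apply: notP_mul => //; apply: notP_exp.
  by rewrite -mulrA [_ * g]mulrC -E1.
case: (hf _ (assoc_sig hP)) => s [ns pw].
move/sigpow: pw; rewrite sigM E2 => pw.
exists (sig s * ('X_ord0 ^+ dN * 'X_ord_max ^+ d0)); split.
  by apply: notP_mul => //; apply: notP_mul => //; apply: notP_exp.
by rewrite -mulrA [_ * g]mulrC.
Qed.

Local Close Scope ring_scope.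

Theorem lemma3p8 (k : fieldType) (n m : nat) (a : 'I_(n.+2) -> nat) :
  3 <= n -> 1 <= m ->
  symbolic_power (SR_Bn k n) m (monom k a) ->
  symbolic_power (SR_Bn k n) m
    (monom k (fun i : 'I_(n.+2) =>
       if (i == ord0) || (i == ord_max) then minn (a ord0) (a ord_max) else a i)).
Proof. exact: lemma3p8_aux. Qed.
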